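(* Let $X,Y$ be topological spaces and $f:X\to Y$ a function. Then $f$ is statistically continuous if and only if $f^{-1}(B)$ is statistically closed in $X$ for every statistically closed subset $B$ of $Y$.
   Context: For $A\subseteq\mathbb{N}$ let $d_n(A)=|A\cap\{1,\dots,n\}|/n$, $\overline{d}(A)=\limsup_n d_n(A)$, $\underline{d}(A)=\liminf_n d_n(A)$, and $d(A)$ their common value when equal. A sequence in $X$ is a map from an infinite subset $M\subseteq\mathbb{N}$ into $X$, written $(x_n)_{n\in M}$; a subsequence is $(x_n)_{n\in N}$ with $N\subseteq M$ infinite. It is nonthin if $\overline{d}(M)>0$. A nonthin sequence $(x_n)_{n\in M}$ is statistically convergent to $a\in X$ if for every open $U\ni a$, $d(\{n\in M:x_n\notin U\})=0$. The statistical closure $\overline{F}^{ST}$ of $F\subseteq X$ is the set of $x\in X$ such that some nonthin sequence in $F$ is statistically convergent to $x$; $F$ is statistically closed if $\overline{F}^{ST}=F$. A function $f:X\to Y$ is statistically continuous if whenever a nonthin sequence $(x_n)_{n\in K}$ in $X$ statistically converges to $x$, the sequence $(f(x_n))_{n\in K}$ statistically converges to $f(x)$. *)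

(* Defs.v *)
From HB Require Import structures.
From mathcomp Require Import all_boot all_order all_algebra.
From mathcomp Require Import all_classical all_reals all_analysis.
From mathcomp Require Import Rstruct Rstruct_topology.
Set Implicit Arguments. Unset Strict Implicit. Unset Printing Implicit Defensive.
Import Order.TTheory GRing.Theory Num.Theory.
Import numFieldNormedType.Exports.
Local Open Scope classical_set_scope.
Local Open Scope ring_scope.

Definition dn (A : set nat) (n : nat) : Rdefinitions.R :=
  (\sum_(1 <= i < n.+1) ((i \in A) : nat)%:R) / n%:R.

Definition upper_density_pos (A : set nat) : Prop :=
  exists2 e : Rdefinitions.R, 0 < e & forall N : nat, exists2 n : nat, (N <= n)%N & e <= dn A n.

(* d(A) = 0 : since d_n(A) >= 0, limsup = liminf = 0 iff d_n(A) -> 0 *)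
Definition density_zero (A : set nat) : Prop :=
  dn A @ \oo --> (0 : Rdefinitions.R).

(* A sequence (x_n)_{n in M} is represented by an index set M and x : nat -> X
   (only the values on M matter). Nonthin: upper density of M is positive. *)
Definition nonthin (M : set nat) : Prop := upper_density_pos M.

Definition stat_conv (X : topologicalType) (M : set nat) (x : nat -> X) (a : X) : Prop :=
  nonthin M /\
  forall U : set X, open U -> U a -> density_zero [set n | M n /\ ~ U (x n)].

Definition stat_closure (X : topologicalType) (F : set X) : set X :=
  [set a | exists M : set nat, exists x : nat -> X,
      nonthin M /\ (forall n, M n -> F (x n)) /\ stat_conv M x a].

Definition stat_closed (X : topologicalType) (F : set X) : Prop :=
  stat_closure F = F.

Definition stat_continuous (X Y : topologicalType) (f : X -> Y) : Prop :=
  forall (K : set nat) (x : nat -> X) (a : X),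
    nonthin K -> stat_conv K x a -> stat_conv K (f \o x) (f a).

(* Main.v *)
Require Import Defs.
From mathcomp Require Import all_boot all_order all_algebra all_classical all_reals all_analysis.
From mathcomp Require Import Rstruct Rstruct_topology.
Import Order.TTheory GRing.Theory Num.Theory.
Import numFieldNormedType.Exports.
Local Open Scope classical_set_scope.
Local Open Scope ring_scope.

Lemma dn_ge0 A n : 0 <= dn A n.
Proof. by rewrite /dn divr_ge0 // sumr_ge0. Qed.

Lemma dn_le A B n : A `<=` B -> dn A n <= dn B n.
Proof.
move=> AB; rewrite /dn ler_wpM2r ?invr_ge0 //; apply: ler_sum => i _.
rewrite ler_nat; case: (boolP (i \in A)) => /= [|_]; last by []. 
by move=> /set_mem /AB /mem_set ->.
Qed.

Lemma dz_sub A B : A `<=` B -> density_zero B -> density_zero A.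
Proof.
move=> AB HB; apply: (@squeeze_cvgr _ _ _ _ (fun=> 0) (dn B)); last 2 first.
- exact: cvg_cst.
- exact: HB.
by near=> n; rewrite dn_ge0 dn_le.
Unshelve. all: by end_near.
Qed.

Lemma dz_set0 : density_zero set0.
Proof.
rewrite /density_zero.
have -> : dn set0 = fun=> 0.
  apply/funext => n; rewrite /dn big1 ?mul0r // => i _.
  by rewrite in_set0.
exact: cvg_cst.
Qed.

Lemma nonthinT : nonthin setT.
Proof.
exists 1 => // N; exists N.+1 => //.
rewrite /dn.
have -> : \sum_(1 <= i < N.+2) ((i \in [set: nat]) : nat)%:R = N.+1%:R :> Rdefinitions.R.
  rewrite (eq_bigr (fun=> 1)); last by move=> i _; rewrite in_setT.
  by rewrite sumr_const_nat subn1 /=.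
by rewrite divff.
Qed.

Lemma nondz_nonthin A : ~ density_zero A -> nonthin A.
Proof.
move=> nA; apply: contrapT => nT; apply: nA.
rewrite /density_zero; apply/(@cvgrPdist_lt _ Rdefinitions.R^o) => e e0.
have [N HN] : exists N, forall n, (N <= n)%N -> dn A n < e.
  apply: contrapT => H; apply: nT; exists e => // N.
  apply: contrapT => H2; apply: H; exists N => n Nn.
  by rewrite ltNge; apply/negP => He; apply: H2; exists n.
exists N => // n /= Nn; rewrite sub0r normrN ger0_norm ?dn_ge0 //; exact: HN.
Qed.

Lemma closure_sup (X : topologicalType) (F : set X) : F `<=` stat_closure F.
Proof.
move=> a Fa; exists setT, (fun=> a); split; first exact: nonthinT.
split => //; split; first exact: nonthinT.
move=> U oU Ua; rewrite (_ : [set n | _] = set0); first exact: dz_set0.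
by apply/seteqP; split => n //= [_ ].
Qed.

Lemma nonthin_ndz M : nonthin M -> ~ density_zero M.
Proof.
move=> [e e0 He] dz.
have [N _ HN] := (@cvgrPdist_lt _ Rdefinitions.R^o _ _ _ _ _).1 dz e e0.
have [n Nn en] := He N.
have := HN n Nn; rewrite sub0r normrN ger0_norm ?dn_ge0 // => /lt_le_trans /(_ en).
by rewrite ltxx.
Qed.

Theorem mainTheorem2 (X Y : topologicalType) (f : X -> Y) :
  stat_continuous f <->
  (forall B : set Y, stat_closed B -> stat_closed (f @^-1` B)).
Proof.
split.
- move=> Hc B HB; apply/seteqP; split; last exact: closure_sup.
  move=> a [M [x [nM [Fx Hconv]]]].
  have Hfc := Hc M x a nM Hconv.
  rewrite /preimage /= -HB; exists M, (f \o x); split => //; split => //.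
- move=> H K x a nK [_ Hx]; split => // V oV Va; apply: contrapT => nd.
  have cl : stat_closed (~` V).
    apply/seteqP; split; last exact: closure_sup.
    move=> y [M [z [nM [Fz [_ Hz]]]]] Vy.
    have := Hz V oV Vy.
    rewrite (_ : [set n | M n /\ ~ V (z n)] = M); first exact: nonthin_ndz.
    by apply/seteqP; split => n /=; [case | move=> Mn; split => //; apply: Fz].
  have Hpre := H _ cl.
  have : (f @^-1` (~` V)) a.
    rewrite -Hpre; exists [set n | K n /\ ~ V (f (x n))], x.
    split; first exact: nondz_nonthin.
    split; first by move=> n [].
    split; first exact: nondz_nonthin.
    move=> U oU Ua; apply: dz_sub (Hx U oU Ua).
    by move=> n [[Kn _] nU].
  by [].
Qed.
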